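(* Let $N\ge 2$ be an integer and consider the graph $G_N$ and the clustering coefficient $C(p)$ defined below. Let $p_j$ denote the $j$-th prime and $\pi(x)$ the number of primes $\le x$. Let $p\le N$ be a prime having at least one neighbour in $G_N$ other than itself. If $p\ge\sqrt N$, then $C(p)=1$. If $p\le \sqrt N$, then $$C(p)=\frac{\left[\pi(p)-1\right]\left[2\left(\pi\left(\frac{N}{p}\right)-1\right)-\pi(p)\right]+2\left[\sum_{j=\pi(p)+1}^{\pi(\sqrt N)}\left(\pi\left(\frac{N}{p_j}\right)-j\right)+\pi(\sqrt N)-1\right]}{\pi\left(\frac{N}{p}\right)\left[\pi\left(\frac{N}{p}\right)-1\right]}.$$
   Context: The graph $G_N$ has vertex set the primes $q\le N$; two distinct primes $q,q'\le N$ are adjacent iff $qq'\le N$ (i.e. some composite $\le N$ is divisible by both), and a prime $q$ carries a self-loop iff $q^2\le N$. For a prime $p\le N$, let $V(p)$ be the set of primes $q\ne p$ adjacent to $p$ and $k=|V(p)|\ge 1$. Let $L(p)$ be the number of unordered pairs of distinct elements of $V(p)$ that are adjacent, plus the number of elements of $V(p)$ carrying a self-loop. The clustering coefficient is $C(p)=L(p)\big/\tfrac{1}{2}k(k+1)$ (the maximum possible number of such links, self-loops allowed). *)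

(* Defs.v *)
From mathcomp Require Import all_boot all_order all_algebra.
Set Implicit Arguments. Unset Strict Implicit. Unset Printing Implicit Defensive.
Import Order.TTheory GRing.Theory Num.Theory.

Definition vertices (N : nat) : seq nat := [seq q <- iota 0 N.+1 | prime q].

Definition adjacent (N q q' : nat) : bool := (q != q') && (q * q' <= N).

Definition selfloop (N q : nat) : bool := q * q <= N.

Definition nbhd (N p : nat) : seq nat :=
  [seq q <- vertices N | (q != p) && adjacent N p q].

(* L(p): unordered pairs {q, q'} (q < q') of distinct elements of V(p) that
   are adjacent, plus the number of elements of V(p) carrying a self-loop. *)
Definition links (N p : nat) : nat :=
  \sum_(q <- nbhd N p) \sum_(q' <- nbhd N p) ((q < q') && adjacent N q q')
  + count (selfloop N) (nbhd N p).

Definition clustering (N p : nat) : rat :=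
  let k := size (nbhd N p) in
  ((links N p)%:R / ((k * k.+1)%:R / 2%:R))%R.

(* pi(n): number of primes <= n (for natural n; pi(x) = pi(floor x)). *)
Definition primepi (n : nat) : nat := count prime (iota 0 n.+1).

Definition isqrt (N : nat) : nat := \max_(r < N.+1 | r * r <= N) r.

Definition next_prime (m : nat) : nat :=
  ex_minn (let: exist2 p Hp Hq := prime_above m in
           ex_intro (fun q => (m < q) && prime q) p (introT andP (conj Hp Hq))).

(* nth_prime j = p_j, the j-th prime (1-indexed: p_1 = 2); nth_prime 0 = 0 is
   a dummy value, never used. *)
Fixpoint nth_prime (j : nat) : nat :=
  match j with
  | 0 => 0
  | j'.+1 => next_prime (nth_prime j')
  end.

(* Main.v *)
Require Import Defs.
From mathcomp Require Import all_boot all_order all_algebra.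
From mathcomp Require Import zify ring lra.
Import Order.TTheory GRing.Theory Num.Theory.
Set Implicit Arguments. Unset Strict Implicit. Unset Printing Implicit Defensive.

Lemma primepiS n : primepi n.+1 = primepi n + prime n.+1.
Proof. by rewrite /primepi -addn1 iotaD count_cat /= addn0. Qed.

Lemma primepi0 : primepi 0 = 0. Proof. by []. Qed.

Lemma primepi_mono m n : m <= n -> primepi m <= primepi n.
Proof.
move=> /subnK <-; elim: (n - m) => // d IH.
by rewrite addSn primepiS; apply: leq_trans IH (leq_addr _ _).
Qed.

Lemma primepi_lt m n : m < n -> prime n -> primepi m < primepi n.
Proof.
case: n => // n mn pn; rewrite primepiS pn addn1 ltnS; exact: primepi_mono.
Qed.

Lemma next_prime_spec m : [/\ m < next_prime m, prime (next_prime m) &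
  forall r, m < r -> prime r -> next_prime m <= r].
Proof.
rewrite /next_prime; case: ex_minnP => q /andP[mq pq] qmin; split => //.
by move=> r mr pr; apply: qmin; rewrite mr pr.
Qed.

Lemma gap m q : m < q -> prime q -> (forall r, m < r -> r < q -> ~~ prime r) ->
  primepi q = (primepi m).+1.
Proof.
move=> mq pq hr.
have H : forall d, m + d < q -> primepi (m + d) = primepi m.
  elim=> [|d IH]; first by rewrite addn0.
  move=> h; rewrite addnS primepiS IH; last by lia.
  by rewrite (negbTE (hr _ _ _)) ?addn0 //; lia.
have -> : q = (m + (q - m - 1)).+1 by lia.
by rewrite primepiS H; [rewrite -(_ : q = (m + (q - m - 1)).+1) ?pq ?addn1 //; lia | lia].
Qed.

Lemma primepi_nth j : primepi (nth_prime j) = j.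
Proof.
elim: j => // j IH /=.
have [h1 h2 h3] := next_prime_spec (nth_prime j).
rewrite (gap h1 h2) ?IH // => r mr rq; apply/negP => pr.
by have := h3 r mr pr; rewrite leqNgt rq.
Qed.

Lemma nth_at n : prime n.+1 -> nth_prime (primepi n).+1 = n.+1.
Proof.
move=> pn /=; set m := nth_prime (primepi n).
have hm : primepi m = primepi n by rewrite primepi_nth.
have mn : m < n.+1.
  rewrite ltnNge; apply/negP => h; have := primepi_mono h.
  by rewrite primepiS pn hm addn1 ltnn.
have [h1 h2 h3] := next_prime_spec m.
have := h3 _ mn pn; rewrite leq_eqVlt => /orP[/eqP //|lt].
have := primepi_lt h1 h2; rewrite hm ltnNge.
by rewrite primepi_mono // -ltnS.
Qed.

Lemma reindex_prime (F : nat -> rat) n :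
  (\sum_(1 <= j < (primepi n).+1) F (nth_prime j) =
  \sum_(q <- iota 0 n.+1) (if prime q then F q else 0))%R.
Proof.
elim: n => [|n IH]; first by rewrite primepi0 big_geq // big_cons big_nil.
rewrite -[n.+2]addn1 iotaD big_cat /= big_seq1 -IH primepiS.
case: (boolP (prime n.+1)) => pn.
  by rewrite addn1 big_nat_recr // nth_at.
by rewrite addn0 !addr0.
Qed.

Lemma isqrtP N x : (x <= isqrt N) = (x * x <= N).
Proof.
have H1 : forall y, y * y <= N -> y <= isqrt N.
  move=> y hy; have yN : y < N.+1 by nia.
  exact: (leq_bigmax_cond (F := fun r : 'I_N.+1 => nat_of_ord r) (Ordinal yN)).
have H2 : isqrt N * isqrt N <= N.
  rewrite leqNgt; apply/negP => h.
  have : isqrt N <= (isqrt N).-1.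
    apply/bigmax_leqP => i hi; nia.
  nia.
apply/idP/idP; last exact: H1.
move=> h; apply: leq_trans H2; exact: leq_mul.
Qed.

Lemma count_split (T : Type) (P Q : pred T) s :
  count P s = count (fun x => P x && Q x) s + count (fun x => P x && ~~ Q x) s.
Proof.
elim: s => //= x s ->; case: (P x); case: (Q x) => /=; lia.
Qed.

Lemma count_le (P : pred nat) n M : n <= M ->
  count (fun x => P x && (x <= n)) (iota 0 M.+1) = count P (iota 0 n.+1).
Proof.
move=> le; rewrite -(subnKC le) -addSn iotaD count_cat.
rewrite (@eq_in_count _ _ P (iota 0 n.+1)); last first.
  by move=> x; rewrite mem_iota => /andP[_ h]; rewrite ltnS in h; rewrite h andbT.
rewrite (@eq_in_count _ _ pred0 (iota (0 + n.+1) (M - n))); last first.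
  move=> x; rewrite mem_iota add0n => /andP[h _] /=.
  by case: (x <= n) / idP => [?|]; [lia | rewrite andbF].
by rewrite count_pred0 addn0.
Qed.

Lemma sum_le (P : pred nat) (F : nat -> rat) n M : n <= M ->
  (\sum_(x <- iota 0 M.+1) (if P x && (x <= n)%N then F x else 0) =
  \sum_(x <- iota 0 n.+1) (if P x then F x else 0))%R.
Proof.
move=> le; rewrite -(subnKC le) -addSn iotaD big_cat.
rewrite (@big1_seq _ _ _ _ (iota (0 + n.+1) (M - n))) ?addr0; last first.
  move=> x /andP[_]; rewrite mem_iota add0n => /andP[h _].
  by case: (x <= n)%N / idP => [?|]; [lia | rewrite andbF].
rewrite Monoid.mulm1. apply: eq_big_seq => x; rewrite mem_iota => /andP[_ h].
by rewrite ltnS in h; rewrite h andbT.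
Qed.

Lemma count_pi b M : b <= M ->
  count (fun x => prime x && (x <= b)) (iota 0 M.+1) = primepi b.
Proof. exact: count_le. Qed.

Lemma count_interval a b M : a <= b -> b <= M ->
  count (fun x => prime x && (a < x) && (x <= b)) (iota 0 M.+1) + primepi a = primepi b.
Proof.
move=> ab bM; rewrite -(count_pi bM) (count_split (fun x => prime x && (x <= b)) (fun x => x <= a)) addnC.
rewrite -(count_pi (leq_trans ab bM)); congr (_ + _); last first.
  apply: eq_count => x /=; case: (prime x) => //=; apply/idP/idP; lia.
apply: eq_count => x /=; case: (prime x) => //=; apply/idP/idP; lia.
Qed.

Lemma count_eqp (P : pred nat) p M : p <= M -> P p ->
  count (fun x => P x && ~~ (x != p)) (iota 0 M.+1) = 1.
Proof.
move=> pM Pp; rewrite (@eq_count _ _ (pred1 p)); last first.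
  by move=> x /=; rewrite negbK; case: eqP => [->|]; rewrite ?Pp ?andbF.
by rewrite count_uniq_mem ?iota_uniq // mem_iota /= ltnS pM.
Qed.

Lemma sum_bool (s : seq nat) (b : pred nat) : \sum_(x <- s) (b x : nat) = count b s.
Proof. by elim: s => [|x s IH]; rewrite ?big_nil ?big_cons ?IH. Qed.

Lemma count_tri (s : seq nat) x : x \notin s ->
  count (fun q => x < q) s + count (fun q => q < x) s = size s.
Proof.
elim: s => //= y s IH; rewrite inE negb_or => /andP[ne ns].
rewrite -(IH ns); move: ne; case: ltngtP => //= _ _; lia.
Qed.

Lemma pairs_uniq (s : seq nat) : uniq s ->
  2 * \sum_(q <- s) count (fun q' => q < q') s + size s = size s * size s.
Proof.
elim: s => [|x s IH]; first by rewrite big_nil.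
move=> /= /andP[xs us]; rewrite big_cons /= ltnn add0n.
have -> : \sum_(q <- s) ((q < x) + count (fun q' => q < q') s) =
   count (fun q => q < x) s + \sum_(q <- s) count (fun q' => q < q') s.
  by rewrite big_split /= sum_bool.
have := IH us; have := count_tri xs; lia.
Qed.

Definition Vp N p q := prime q && (q != p) && (p * q <= N).

Lemma nbhdE N p : nbhd N p = filter (Vp N p) (iota 0 N.+1).
Proof.
rewrite /nbhd /vertices -filter_predI; apply: eq_filter => q /=.
rewrite /Vp /adjacent; case: (prime q); rewrite ?andbF //=.
by rewrite andbT [p == q]eq_sym andbA andbb.
Qed.

Definition inner N p q := count (fun q' => Vp N p q' && ((q < q') && adjacent N q q')) (iota 0 N.+1).

Lemma linksE N p : links N p =
  \sum_(q <- iota 0 N.+1 | Vp N p q) inner N p q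
  + count (fun x => Vp N p x && selfloop N x) (iota 0 N.+1).
Proof.
rewrite /links nbhdE big_filter count_filter; congr (_ + _).
  apply: eq_bigr => q _; rewrite sum_bool count_filter /inner.
  by apply: eq_count => x /=; rewrite andbC.
by apply: eq_count => x /=; rewrite andbC.
Qed.

Lemma inner_small N p q : prime p -> p * p <= N -> prime q -> q < p ->
  inner N p q + 1 + primepi q = primepi (N %/ p).
Proof.
move=> pp ppN pq qp; have p0 : 0 < p by apply: prime_gt0.
have pNp : p <= N %/ p by rewrite leq_divRL.
have NpN : N %/ p <= N by apply: leq_div.
rewrite -(count_interval (M := N) (ltnW (leq_trans qp pNp)) NpN).
rewrite (count_split _ (fun x => x != p)) count_eqp; last first.
- by rewrite pp qp pNp.
- by apply: leq_trans pNp NpN.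
congr (_ + _ + _); apply: eq_count => x /=.
rewrite /Vp /adjacent leq_divRL //; case: (prime x) => //=; nia.
Qed.

Lemma inner_big N p q : prime p -> prime q -> p < q -> q * q <= N ->
  inner N p q + primepi q = primepi (N %/ q).
Proof.
move=> pp pq pq' qqN; have q0 : 0 < q by apply: prime_gt0.
have qNq : q <= N %/ q by rewrite leq_divRL.
have NqN : N %/ q <= N by apply: leq_div.
rewrite -(count_interval (M := N) qNq NqN); congr (_ + _).
apply: eq_count => x /=.
rewrite /Vp /adjacent leq_divRL //; case: (prime x) => //=; nia.
Qed.

Lemma inner_zero N p q : prime p -> prime q -> p < q -> N < q * q ->
  inner N p q = 0.
Proof.
move=> pp pq pq' qqN; rewrite /inner; apply/eqP; rewrite -leqn0 leqNgt -has_count.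
apply/hasP => [[x _]]; rewrite /Vp /adjacent /=; case: (prime x) => //=; nia.
Qed.

Lemma selfE N p : prime p -> p * p <= N ->
  count (fun x => Vp N p x && selfloop N x) (iota 0 N.+1) + 1 = primepi (isqrt N).
Proof.
move=> pp ppN.
have sN : isqrt N <= N.
  by have := isqrtP N (isqrt N); rewrite leqnn => /esym h; nia.
have ps : p <= isqrt N by rewrite isqrtP.
have pN : p <= N by apply: leq_trans ps sN.
rewrite -(count_pi sN) (count_split (fun x => prime x && (x <= isqrt N)) (fun x => x != p)) count_eqp ?pp ?ps ?pN //.
congr (_ + _); apply: eq_count => x /=.
rewrite /Vp /selfloop isqrtP; case: (prime x) => //=.
case: (leqP x p) => h; nia.
Qed.

Lemma sizeE N p : prime p -> p * p <= N ->
  size (nbhd N p) + 1 = primepi (N %/ p).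
Proof.
move=> pp ppN; have p0 : 0 < p by apply: prime_gt0.
have pNp : p <= N %/ p by rewrite leq_divRL.
have NpN : N %/ p <= N by apply: leq_div.
rewrite nbhdE size_filter -(count_pi NpN).
rewrite (count_split (fun x => prime x && (x <= N %/ p)) (fun x => x != p)).
have pN : p <= N by apply: leq_trans pNp NpN.
rewrite count_eqp ?pp ?pNp ?pN //.
congr (_ + _); apply: eq_count => x /=.
rewrite /Vp leq_divRL //; case: (prime x) => //=; nia.
Qed.

Lemma closed_form a (B : rat) :
  (2 * \sum_(1 <= j < a.+1) (B - 1 - j%:R) = a%:R * (2 * (B - 1) - a%:R - 1))%R.
Proof.
elim: a => [|a IH]; first by rewrite big_geq // mulr0 mul0r.
rewrite big_nat_recr //= mulrDr IH -[a.+1]addn1 natrD; ring.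
Qed.

Lemma case1 N p : prime p -> 0 < size (nbhd N p) -> N <= p * p ->
  clustering N p = 1%R.
Proof.
move=> pp hk hNp; have p0 : 0 < p by apply: prime_gt0.
set k := size (nbhd N p).
have uq : uniq (nbhd N p) by rewrite nbhdE filter_uniq ?iota_uniq.
have memV : forall q, q \in nbhd N p -> Vp N p q.
  by move=> q; rewrite nbhdE mem_filter => /andP[].
have hL : links N p = \sum_(q <- nbhd N p) count (fun q' => q < q') (nbhd N p) + k.
  rewrite /links; congr (_ + _).
    apply: eq_big_seq => q hq; rewrite sum_bool; apply: eq_in_count => q' hq'.
    have := memV _ hq; have := memV _ hq'; rewrite /Vp /adjacent /=.
    move=> /andP[/andP[_ _] h1] /andP[/andP[_ _] h2].
    apply/idP/idP; nia.
  rewrite (@eq_in_count _ _ predT) ?count_predT // => q hq.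
  by have := memV _ hq; rewrite /Vp /selfloop /=; nia.
have e : (links N p * 2 = k * k.+1)%N.
  have := pairs_uniq uq; rewrite hL -/k; nia.
rewrite /clustering -/k -e natrM mulfK ?divff //.
  by rewrite pnatr_eq0 -lt0n hL; apply: leq_trans hk (leq_addl _ _).
Qed.

Lemma pairs_rat N p : prime p -> p * p <= N ->
  ((\sum_(q <- iota 0 N.+1 | Vp N p q) inner N p q)%:R =
   \sum_(q <- iota 0 N.+1) (if prime q && (q <= p.-1)%N
        then (primepi (N %/ p))%:R - 1 - (primepi q)%:R else 0) +
   \sum_(q <- iota 0 N.+1) (if prime q && (p < q)%N && (q <= isqrt N)%N
        then (primepi (N %/ q))%:R - (primepi q)%:R else 0) :> rat)%R.
Proof.
move=> pp ppN; have p0 : 0 < p by apply: prime_gt0.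
rewrite natr_sum big_mkcond -big_split /=; apply: eq_bigr => q _.
case: (boolP (Vp N p q)) => hV.
  move: (hV); rewrite /Vp => /andP[/andP[pq qp] pqN].
  case: (ltngtP q p) => h.
  - have e := inner_small pp ppN pq h.
    have -> : (q <= p.-1)%N by lia.
    by rewrite pq /= addr0 -e !natrD; ring.
  - rewrite pq (_ : (q <= p.-1) = false) /=; last by lia.
    rewrite isqrtP.
    case: (leqP (q * q) N) => hq.
      by rewrite -(inner_big pp pq h hq) natrD add0r; ring.
    by rewrite (inner_zero pp pq h hq) add0r.
  - by move: qp; rewrite h eqxx.
have nV : forall b : bool, (b -> Vp N p q) -> ((if b then ((primepi (N %/ p))%:R - 1 - (primepi q)%:R) else 0 : rat) = 0 /\
   (if b then ((primepi (N %/ q))%:R - (primepi q)%:R) else 0 : rat) = 0)%R.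
  by move=> [] // /(_ isT); rewrite (negbTE hV).
rewrite (proj1 (nV _ _)); last first.
  by move=> /andP[pq h]; rewrite /Vp pq /=; apply/andP; split; nia.
rewrite (proj2 (nV _ _)) ?addr0 //.
move=> /andP[/andP[pq h] h']; rewrite isqrtP in h'; rewrite /Vp pq /=; apply/andP; split; nia.
Qed.

Lemma second_sum N p : prime p -> p * p <= N ->
  (\sum_(q <- iota 0 N.+1) (if prime q && (p < q)%N && (q <= isqrt N)%N
        then (primepi (N %/ q))%:R - (primepi q)%:R else 0) =
   \sum_((primepi p).+1 <= j < (primepi (isqrt N)).+1)
        ((primepi (N %/ nth_prime j))%:R - j%:R) :> rat)%R.
Proof.
move=> pp ppN.
set G := fun q => ((primepi (N %/ q))%:R - (primepi q)%:R : rat)%R.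
have sN : isqrt N <= N.
  by have := isqrtP N (isqrt N); rewrite leqnn => /esym h; nia.
have ps : p <= isqrt N by rewrite isqrtP.
have pN : p <= N by apply: leq_trans ps sN.
transitivity (\sum_((primepi p).+1 <= j < (primepi (isqrt N)).+1) G (nth_prime j))%R;
  last by apply: eq_bigr => j _; rewrite /G primepi_nth.
have hA : (primepi p).+1 <= (primepi (isqrt N)).+1 by rewrite ltnS primepi_mono.
have e : (\sum_(1 <= j < (primepi (isqrt N)).+1) G (nth_prime j) =
   \sum_(1 <= j < (primepi p).+1) G (nth_prime j) +
   \sum_((primepi p).+1 <= j < (primepi (isqrt N)).+1) G (nth_prime j))%R.
  by apply: big_cat_nat.
rewrite !reindex_prime -(sum_le prime G sN) -(sum_le prime G pN) in e.
apply: (@addrI _ (\sum_(x <- iota 0 N.+1) (if prime x && (x <= p)%N then G x else 0))%R).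
rewrite -e -big_split /=; apply: eq_bigr => q _.
case: (prime q) => /=; last by rewrite addr0.
case: (leqP q p) => h.
  by rewrite (leq_trans h ps) addr0.
by rewrite add0r.
Qed.

Unset Implicit Arguments.
Theorem mainTheorem11 (N p : nat) :
  2 <= N -> prime p -> p <= N -> 0 < size (nbhd N p) ->
  (N <= p * p -> clustering N p = 1%R) /\
  (p * p <= N ->
   clustering N p =
   (let A : rat := (primepi p)%:R in
    let B : rat := (primepi (N %/ p))%:R in
    let S : nat := primepi (isqrt N) in
    ((A - 1) * (2 * (B - 1) - A)
     + 2 * ((\sum_((primepi p).+1 <= j < S.+1)
               ((primepi (N %/ nth_prime j))%:R - j%:R))
            + S%:R - 1))
    / (B * (B - 1)))%R).
Proof.
move=> N2 pp pN hk; split; first exact: case1.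
move=> ppN; cbv zeta; have p0 : 0 < p by apply: prime_gt0.
set T := (\sum_((primepi p).+1 <= j < (primepi (isqrt N)).+1) _)%R.
rewrite /clustering linksE.
have hP := pairs_rat pp ppN; rewrite second_sum // -/T in hP.
have hs := selfE pp ppN.
have hk' := sizeE pp ppN.
have h1 : (\sum_(q <- iota 0 N.+1) (if prime q && (q <= p.-1)%N
        then (primepi (N %/ p))%:R - 1 - (primepi q)%:R else 0) =
        \sum_(1 <= j < (primepi p.-1).+1) ((primepi (N %/ p))%:R - 1 - j%:R) :> rat)%R.
  rewrite sum_le; last by lia.
  by rewrite -reindex_prime; apply: eq_bigr => j _; rewrite primepi_nth.
have hA : primepi p = (primepi p.-1).+1 by rewrite -{1}(prednK p0) primepiS (prednK p0) pp addn1.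
rewrite h1 in hP.
set Y := (\sum_(1 <= j < _) _)%R in hP.
have hY : (2 * Y = (primepi p.-1)%:R * (2 * ((primepi (N %/ p))%:R - 1) - (primepi p.-1)%:R - 1) :> rat)%R.
  exact: closed_form.
have hY' : Y = ((2 * Y) / 2)%R by field.
rewrite natrD hP hY' hY.
rewrite -hk' hA -hs.
have k0 : ((size (nbhd N p))%:R : rat) != 0%R by rewrite pnatr_eq0 -lt0n.
clearbody T.
move: (size (nbhd N p)) k0 => k k0.
move: (primepi p.-1) => a.
move: (count _ _) => c.
rewrite -[k.+1]addn1 -[a.+1]addn1 !natrD !natrM natrD.
have k1 : (k%:R + 1 : rat)%R != 0%R.
  by rewrite -(natrD _ k 1) pnatr_eq0 addn1.
by field; rewrite addrK k0 k1.
Qed.
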